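(* Let $H:\mathbb{R}_+\to[0,1]$ be a measurable function with $\|H\|_1:=\int_0^\infty H(x)\,dx<\infty$ and $\|H\|_2^2:=\int_0^\infty H(x)^2\,dx<\|H\|_1$. Fix $\tau>0$, $\alpha>0$, and a positive integer $L$; set $R_L=\ln(\tau L)/(2\|H\|_1)$. Let $\mathcal{P}_L$ be a Poisson point process of unit intensity on the torus $[0,L]$ (with $0$ and $L$ identified), with circular distance $\rho^L(x,y)=\min\{|x-y|,L-|x-y|\}$, and let $\tilde h^L(x,y)=H(\rho^L(x,y)/R_L)\mathbb{1}\{\rho^L(x,y)\le R_L^{1+1/\alpha}\}$. Let $\mathcal{G}_{\tilde h^L}(\mathcal{P}_L)$ be the random graph on vertex set $\mathcal{P}_L$ in which, conditionally on $\mathcal{P}_L$, each pair of distinct nodes $x,y$ is joined by an edge with probability $\tilde h^L(x,y)$, independently over pairs, and let $\widetilde N_{\mathrm{iso}}$ be its number of isolated nodes. For $m\in\mathbb{N}$, divide the torus into $mL$ segments $A_i=[(i-1)/m,i/m)$, $i\in\Gamma=\{1,\dots,mL\}$, and let $I_i$ be the indicator that $A_i$ contains exactly one node of $\mathcal{P}_L$ and that node is isolated in $\mathcal{G}_{\tilde h^L}(\mathcal{P}_L)$. Let $W_{m,L}=\sum_{i\in\Gamma}I_i$. Then, for fixed $L$, $$d_{TV}(\widetilde N_{\mathrm{iso}},W_{m,L})\to 0\quad\text{as } m\to\infty.$$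
   Context: $d_{TV}(X,Y)$ denotes the total variation distance between the distributions of $X$ and $Y$. The paper assumes $L$ is an integer for convenience of the discretisation. *)

(* Defs.v *)
From HB Require Import structures.
From mathcomp Require Import all_boot all_order all_algebra.
From mathcomp Require Import all_classical all_reals all_analysis.
Set Implicit Arguments. Unset Strict Implicit. Unset Printing Implicit Defensive.
Import Order.TTheory GRing.Theory Num.Theory.
Import numFieldNormedType.Exports.
Local Open Scope classical_set_scope.
Local Open Scope ring_scope.

Section Model.
Variable R : realType.
Local Notation mu := (@lebesgue_measure R).

Definition rhoL (L x y : R) : R := Num.min `|x - y| (L - `|x - y|).

Definition H1norm (H : R -> R) : R :=
  fine (\int[mu]_(x in `[0%R, +oo[%classic) (H x)%:E)%E.
Definition RL (H : R -> R) (tau L : R) : R := ln (tau * L) / (2 * H1norm H).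
Definition htilde (H : R -> R) (tau alpha L : R) (x y : R) : R :=
  H (rhoL L x y / RL H tau L)
  * (if rhoL L x y <= RL H tau L `^ (1 + alpha^-1) then 1 else 0).

(* Given n points (a sequence s, of which entries 0..n-1 are used),
   a graph is an edge set E of pairs (i,j) with i < j. *)
Definition upper (n : nat) : {set 'I_n * 'I_n} := [set p : 'I_n * 'I_n | (p.1 < p.2)%N].

Definition edge_weight (h : R -> R -> R) (n : nat) (s : seq R)
  (E : {set 'I_n * 'I_n}) : R :=
  \prod_(p in upper n)
     (if p \in E then h (nth 0%R s p.1) (nth 0%R s p.2)
      else 1 - h (nth 0%R s p.1) (nth 0%R s p.2)).

Definition adjacent (n : nat) (E : {set 'I_n * 'I_n}) (i j : 'I_n) : bool :=
  ((i, j) \in E) || ((j, i) \in E).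

Definition isolated (n : nat) (E : {set 'I_n * 'I_n}) (i : 'I_n) : bool :=
  [forall j, (j != i) ==> ~~ adjacent E i j].

Definition Niso (n : nat) (s : seq R) (E : {set 'I_n * 'I_n}) : nat :=
  #|[set i | isolated E i]|.

(* W_{m,L}: segments A_i = [i/m, (i+1)/m), i = 0, ..., mL-1 (0-based) *)
Definition in_seg (m : nat) (k : nat) (x : R) : bool :=
  (k%:R / m%:R <= x) && (x < k.+1%:R / m%:R).

Definition Iseg (m : nat) (n : nat) (s : seq R) (E : {set 'I_n * 'I_n})
  (k : nat) : bool :=
  (#|[set j : 'I_n | in_seg m k (nth 0%R s j)]| == 1)%N &&
  [forall j : 'I_n, in_seg m k (nth 0%R s j) ==> isolated E j].

Definition Wml (m L : nat) (n : nat) (s : seq R) (E : {set 'I_n * 'I_n}) : nat :=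
  \sum_(k < m * L) Iseg m s E k.

Fixpoint iint (L : R) (n : nat) (F : seq R -> \bar R) : \bar R :=
  match n with
  | 0 => F [::]
  | n'.+1 => (\int[mu]_(x in `[0%R, L[%classic) iint L n' (fun s => F (x :: s)))%E
  end.

(* Probability of an event ev(n, points, edge set) for the model:
   P_L = Poisson process of unit intensity on the torus [0,L):
   N ~ Poisson(L), given N = n the points are iid uniform on [0,L);
   given the points, edges independent with probabilities h. *)
Definition model_prob (L : R) (h : R -> R -> R)
  (ev : forall n : nat, seq R -> {set 'I_n * 'I_n} -> bool) : \bar R :=
  (\sum_(0 <= n <oo)
     ((expR (- L) * L ^+ n / n`!%:R * L ^- n)%:E *
      iint L n (fun s => (\sum_(E in {set 'I_n * 'I_n} | E \subset upper n)
                            edge_weight h s E * (ev n s E)%:R)%:E)))%E.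

Definition dTV_nat (P Q : set nat -> \bar R) : R :=
  sup [set `|fine (P A) - fine (Q A)| | A in [set: set nat]].

End Model.

(* Main.v *)
Require Import Defs.
From HB Require Import structures.
From mathcomp Require Import all_boot all_order all_algebra.
From mathcomp Require Import all_classical all_reals all_analysis.
From mathcomp Require Import measurable_realfun lebesgue_integral.
From mathcomp Require Import ring lra zify.
Set Implicit Arguments. Unset Strict Implicit. Unset Printing Implicit Defensive.
Import Order.TTheory GRing.Theory Num.Theory.
Import numFieldNormedType.Exports.
Import HBNNSimple.
Local Open Scope classical_set_scope.
Local Open Scope ring_scope.
Section S.
Context (R : realType).
Local Notation mu := (@lebesgue_measure R).
Local Open Scope ereal_scope.

Lemma int_le (D : set R) (f g : R -> \bar R) :
  (forall x, D x -> 0 <= f x) -> (forall x, D x -> f x <= g x) ->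
  \int[mu]_(x in D) f x <= \int[mu]_(x in D) g x.
Proof.
move=> f0 fg.
have g0 : forall x, D x -> 0 <= g x by move=> x Dx; exact: le_trans (f0 x Dx) (fg x Dx).
rewrite !ge0_integralE //; apply: ereal_sup_le => _ [h /= hf <-]; exists h => //= x.
apply: le_trans (hf x) _; rewrite /patch; case: ifP => // /[!inE] Dx; exact: fg.
Qed.

Lemma int_subadd (D : set R) (f g : R -> \bar R) : measurable D ->
  (forall x, D x -> 0 <= f x) -> (forall x, D x -> 0 <= g x) ->
  measurable_fun D (g : R -> \bar R) ->
  \int[mu]_(x in D) (f x + g x) <= \int[mu]_(x in D) f x + \int[mu]_(x in D) g x.
Proof.
move=> mD f0 g0 mg.
have fg0 : forall x, D x -> 0 <= f x + g x by move=> x Dx; rewrite adde_ge0 ?f0 ?g0.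
rewrite ge0_integralE //; apply: ge_ereal_sup => _ [h /= hfg <-].
set F := f \_ D; set G := g \_ D.
have F0 x : 0 <= F x by rewrite /F /patch; case: ifP => // /[!inE]; exact: f0.
have G0 x : 0 <= G x by rewrite /G /patch; case: ifP => // /[!inE]; exact: g0.
have mG : measurable_fun setT G by exact/(measurable_restrictT _ _).1.
have hFG x : (h x)%:E <= F x + G x.
  by apply: le_trans (hfg x) _; rewrite /F /G /patch; case: ifP => //; rewrite adde0.
pose k x := maxe ((h x)%:E - G x) 0.
have mk : measurable_fun setT k.
  apply: measurable_maxe; last exact: measurable_cst.
  apply: emeasurable_funB => //; apply/measurable_EFinP; exact: measurable_funTS.
have k0 x : 0 <= k x by rewrite /k le_max lexx orbT.
have kF x : k x <= F x.
  rewrite /k ge_max F0 andbT.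
  have [Gy|Gfin] := eqVneq (G x) +oo.
    by rewrite Gy /= addeNy (le_trans _ (F0 x)) ?leNye.
  have : G x \is a fin_num by rewrite fin_numE Gfin andbT; apply: contraTneq (G0 x) => ->.
  by move=> Gf; rewrite leeBlDr // addeC.
have hkG x : (h x)%:E <= k x + G x.
  have [Gy|Gfin] := eqVneq (G x) +oo.
    by rewrite Gy addey ?leey // gt_eqF // (lt_le_trans _ (k0 x)) ?ltNy0.
  rewrite /k.
  have Gf : G x \is a fin_num by rewrite fin_numE Gfin andbT; apply: contraTneq (G0 x) => ->.
  rewrite maxEle; case: ifPn => hG; first by rewrite -leeBlDr.
  by rewrite subeK.
rewrite -integralT_nnsfun.
apply: (@le_trans _ _ (\int[mu]_x (k x + G x))).
  apply: ge0_le_integral => //.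
  - move=> x _; rewrite lee_fin; exact: fun_ge0.
  - apply/measurable_EFinP; exact: measurable_funP.
  - exact: emeasurable_funD.
rewrite ge0_integralD //.

rewrite [X in _ <= X + _]integral_mkcond [X in _ <= _ + X]integral_mkcond.
apply: leeD => //; apply: int_le => // x _.
Qed.
End S.

Section Iint.
Context (R : realType) (L : R) (L0 : 0 < L).
Local Notation mu := (@lebesgue_measure R).
Local Open Scope ereal_scope.
Let D : set R := `[0%R, L[%classic.
Let mD : measurable D. Proof. exact: measurable_itv. Qed.
Let muD : mu D = L%:E.
Proof. by rewrite /D lebesgue_measure_itv /= lte_fin L0 sube0. Qed.
Let DP x : D x -> (0 <= x)%R && (x < L)%R.
Proof. by rewrite /D /= in_itv /= => ->. Qed.

Definition domL (s : seq R) := all (fun x => (0 <= x)%R && (x < L)%R) s.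

Lemma dom_cons x s : D x -> domL s -> domL (x :: s).
Proof. by move=> /DP Dx ds; rewrite /domL /= Dx. Qed.

Lemma iint_ge0 n F : (forall s, domL s -> 0 <= F s) -> 0 <= iint L n F.
Proof.
elim: n F => [|n IH] F F0 /=; first exact: F0.
apply: integral_ge0 => x Dx; apply: IH => s ds; apply: F0; exact: dom_cons.
Qed.

Lemma iint_le n F G : (forall s, domL s -> 0 <= F s) ->
  (forall s, domL s -> F s <= G s) -> iint L n F <= iint L n G.
Proof.
elim: n F G => [|n IH] F G F0 FG /=; first exact: FG.
apply: int_le => x Dx.
  apply: iint_ge0 => s ds; apply: F0; exact: dom_cons.
apply: IH => s ds; [apply: F0|apply: FG]; exact: dom_cons.
Qed.

Lemma iint_cst n (c : R) : (0 <= c)%R -> iint L n (fun _ => c%:E) = (c * L ^+ n)%:E.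
Proof.
move=> c0; elim: n => [|n IH] /=; first by rewrite expr0 mulr1.
rewrite IH; have := integral_cst mu mD ((c * L ^+ n)%:E); rewrite /cst => ->.
rewrite [X in _ * X = _](_ : _ = L%:E); last exact: muD.
rewrite -EFinM exprS.
by rewrite [(L * _)%R]mulrC mulrA.
Qed.

Fixpoint IM (n : nat) (G : seq R -> \bar R) : Prop :=
  match n with
  | 0 => True
  | n'.+1 => measurable_fun D (fun x => iint L n' (fun s => G (x :: s)))
             /\ forall x, IM n' (fun s => G (x :: s))
  end.

Lemma iint_subadd n F G : (forall s, domL s -> 0 <= F s) ->
  (forall s, domL s -> 0 <= G s) -> IM n G ->
  iint L n (fun s => F s + G s) <= iint L n F + iint L n G.
Proof.
elim: n F G => [|n IH] F G F0 G0 /=; first by [].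
move=> [mG IMG].
apply: (@le_trans _ _ (\int[mu]_(x in D) (iint L n (fun s => F (x :: s)) +
                                           iint L n (fun s => G (x :: s))))).
  apply: int_le => x Dx.
    apply: iint_ge0 => s ds; apply: adde_ge0; [apply: F0|apply: G0]; exact: dom_cons.
  apply: IH => // s ds; [apply: F0|apply: G0]; exact: dom_cons.
apply: int_subadd => // x Dx; apply: iint_ge0 => s ds;
  [apply: F0|apply: G0]; exact: dom_cons.
Qed.

Lemma IM_cst n c : IM n (fun _ => c).
Proof.
elim: n => [|n IH] //=; split => //; exact: measurable_cst.
Qed.


Lemma iint_subadd_sum n (I : eqType) (r : seq I) F (g : I -> seq R -> R) :
  (forall s, domL s -> 0 <= F s) -> (forall t s, domL s -> (0 <= g t s)%R) ->
  (forall t, t \in r -> IM n (fun s => (g t s)%:E)) ->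
  iint L n (fun s => F s + (\sum_(t <- r) g t s)%:E) <=
  iint L n F + \sum_(t <- r) iint L n (fun s => (g t s)%:E).
Proof.
move=> F0 g0; elim: r F F0 => [|t r IH] F F0 IMg.
  rewrite big_nil adde0 (_ : (fun s => _) = F) //.
  by apply: funext => s; rewrite big_nil adde0.
rewrite (_ : (fun s => _) = (fun s => (F s + (g t s)%:E) + (\sum_(t <- r) g t s)%:E)); last first.
  by apply: funext => s; rewrite big_cons EFinD addeA.
apply: le_trans (IH _ _ _) _.
- by move=> s ds; rewrite adde_ge0 ?F0 // lee_fin g0.
- by move=> u ur; apply: IMg; rewrite in_cons ur orbT.
rewrite big_cons addeA; apply: leeD => //.
apply: iint_subadd => //; last by apply: IMg; rewrite in_cons eqxx.
by move=> s ds; rewrite lee_fin; exact: g0.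
Qed.

Lemma indic01 (A : set R) x : (0 <= (\1_A x : R))%R /\ ((\1_A x : R) <= 1)%R.
Proof. by rewrite indicE; case: (x \in A). Qed.

Lemma meas_in (A : set R) : measurable A -> measurable_fun D (fun x => x \in A).
Proof.
move=> mA; apply: (measurable_fun_bool true) => //.
rewrite (_ : _ @^-1` _ = A); first exact: measurableI.
by apply/seteqP; split => x /=; [move=> ?; exact/set_mem | move=> ?; exact/mem_set].
Qed.

Lemma IM_single n k (A : set R) : measurable A ->
  IM n (fun s => (\1_A (nth 0%R s k))%:E).
Proof.
move=> mA; elim: n k => [|n IH] k //=; case: k => [|k] /=; split.
- rewrite (_ : (fun x => _) = (fun x => (\1_A x * L ^+ n)%:E)); last first.
    by apply: funext => x; rewrite iint_cst //; case: (indic01 A x).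
  apply/measurable_EFinP; apply: measurable_funM; [exact: measurable_indic|exact: measurable_cst].
- by move=> x; exact: IM_cst.
- exact: measurable_cst.
- by move=> x; exact: IH.
Qed.

Lemma IM_pair n i j (A B : set R) : measurable A -> measurable B -> (i < j)%N ->
  IM n (fun s => (\1_A (nth 0%R s i) * \1_B (nth 0%R s j))%:E).
Proof.
move=> mA mB; elim: n i j => [|n IH] i j ij //=.
case: i ij => [|i]; case: j => [|j] //= ij; split.
- pose K := iint L n (fun s => (\1_B (nth 0%R s j))%:E).
  have E x : iint L n (fun s => (\1_A x * \1_B (nth 0%R s j))%:E) =
             if x \in A then K else 0.
    rewrite indicE; case: (x \in A).
      by congr (iint L n _); apply: funext => s; rewrite mul1r.
    rewrite (_ : (fun s => _) = (fun _ => 0%R%:E)); last first.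
      by apply: funext => s; rewrite mul0r.
    by rewrite iint_cst // mul0r.
  rewrite (_ : (fun x => _) = (fun x => if x \in A then K else 0)); last first.
    by apply: funext => x; exact: E.
  apply: (measurable_fun_if (g := cst K) (h := cst 0) (f := fun x => x \in A) mD).
  + exact: meas_in.
  + exact: measurable_cst.
  + exact: measurable_cst.
- move=> x; rewrite indicE; case: (x \in A).
    rewrite (_ : (fun s => _) = (fun s => (\1_B (nth 0%R s j))%:E)); first exact: IM_single.
    by apply: funext => s; rewrite mul1r.
  rewrite (_ : (fun s => _) = (fun _ => 0%R%:E)); first exact: IM_cst.
  by apply: funext => s; rewrite mul0r.
- exact: measurable_cst.
- by move=> x; exact: IH.
Qed.

Lemma int_indic_le (A : set R) (a c : R) : measurable A -> (0 <= c)%R ->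
  mu A <= a%:E -> \int[mu]_(x in D) (\1_A x * c)%:E <= (a * c)%:E.
Proof.
move=> mA c0 muA.
rewrite (_ : (fun x => _) = (fun x => (\1_A x)%:E * c%:E)); last first.
  by apply: funext => x; rewrite EFinM.
rewrite (@ge0_integralZr _ _ _ mu D mD (fun x => (\1_A x)%:E)); first last.
- by rewrite lee_fin.
- by move=> x _; rewrite lee_fin; case: (indic01 A x).
- by apply/measurable_EFinP; exact: measurable_indic.
rewrite integral_indic // EFinM lee_wpmul2r ?lee_fin //.
by apply: le_trans muA; apply: le_measure; rewrite ?inE //; exact: measurableI.
Qed.

Lemma iint_single_le n k (A : set R) (a : R) : measurable A -> (0 <= a)%R ->
  mu A <= a%:E -> (1 <= L)%R -> (k < n)%N ->
  iint L n (fun s => (\1_A (nth 0%R s k))%:E) <= (a * L ^+ n)%:E.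
Proof.
move=> mA a0 muA L1; elim: n k => [|n IH] [|k] //= kn.
- rewrite (_ : (fun x => _) = (fun x => (\1_A x * L ^+ n)%:E)); last first.
    by apply: funext => x; rewrite iint_cst //; case: (indic01 A x).
  have Ln0 : (0 <= L ^+ n)%R by rewrite exprn_ge0 // ltW.
  apply: le_trans (int_indic_le mA Ln0 muA) _.
  by rewrite lee_fin ler_wpM2l // exprS ler_peMl.
- apply: le_trans (int_le (g := fun _ => (a * L ^+ n)%:E) _ _) _.
  + move=> y Dy; apply: iint_ge0 => s _; rewrite lee_fin; exact: (indic01 A _).1.
  + by move=> y Dy; exact: IH.
  have := integral_cst mu mD ((a * L ^+ n)%:E); rewrite /cst => ->.
  rewrite [X in _ * X <= _](_ : _ = L%:E); last exact: muD.
  by rewrite -EFinM exprS [(L * _)%R]mulrC mulrA.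
Qed.

Lemma iint_pair_le n i j (A B : set R) (a b : R) : measurable A -> measurable B ->
  (0 <= a)%R -> (0 <= b)%R -> mu A <= a%:E -> mu B <= b%:E -> (1 <= L)%R ->
  (i < j)%N -> (j < n)%N ->
  iint L n (fun s => (\1_A (nth 0%R s i) * \1_B (nth 0%R s j))%:E) <= (a * b * L ^+ n)%:E.
Proof.
move=> mA mB a0 b0 muA muB L1; elim: n i j => [|n IH] [|i] [|j] //= ij jn.
- apply: le_trans (int_le (g := fun x => (\1_A x * (b * L ^+ n))%:E) _ _) _.
  + move=> x Dx; apply: iint_ge0 => s _; rewrite lee_fin.
    by apply: mulr_ge0; [case: (indic01 A x)|case: (indic01 B (nth 0%R s j))].
  + move=> x Dx; rewrite indicE; case: (x \in A).
      rewrite mul1r (_ : (fun s => _) = (fun s => (\1_B (nth 0%R s j))%:E)); last first.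
        by apply: funext => s; rewrite mul1r.
      exact: iint_single_le.
    rewrite mul0r (_ : (fun s => _) = (fun _ => 0%R%:E)); last first.
      by apply: funext => s; rewrite mul0r.
    by rewrite iint_cst // mul0r.
  have Ln0 : (0 <= b * L ^+ n)%R by rewrite mulr_ge0 // exprn_ge0 // ltW.
  apply: le_trans (int_indic_le mA Ln0 muA) _.
  rewrite lee_fin -mulrA ler_wpM2l // ler_wpM2l //.
  by rewrite exprS ler_peMl // exprn_ge0 // ltW.
- apply: le_trans (int_le (g := fun _ => (a * b * L ^+ n)%:E) _ _) _.
  + move=> x Dx; apply: iint_ge0 => s _; rewrite lee_fin.
    by apply: mulr_ge0; [case: (indic01 A (nth 0%R s i))|case: (indic01 B (nth 0%R s j))].
  + by move=> y Dy; exact: IH.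
  have := integral_cst mu mD ((a * b * L ^+ n)%:E); rewrite /cst => ->.
  rewrite [X in _ * X <= _](_ : _ = L%:E); last exact: muD.
  by rewrite -EFinM exprS [(L * _)%R]mulrC mulrA.
Qed.

End Iint.
Section Comb.
Context (R : realType).

Lemma in_segE (m k : nat) (x : R) : (0 < m)%N -> 0 <= x ->
  in_seg m k x = (Num.truncn (x * m%:R) == k).
Proof.
move=> m0 x0; have m0' : 0 < m%:R :> R by rewrite ltr0n.
rewrite /in_seg truncn_eq ?mulr_ge0 //.
by rewrite ler_pdivrMr // ltr_pdivlMr.
Qed.

Lemma card_setb (n : nat) (P : pred 'I_n) : #|[set i | P i]| = (\sum_(i < n) P i)%N.
Proof.
rewrite -sum1_card big_mkcond /=; apply: eq_bigr => i _.
by case: (boolP (P i)) => Pi; [rewrite mem_set | rewrite memNset //=; apply/negP].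

Qed.

Lemma card_setF (n : nat) (P : pred 'I_n) : #|[set i | P i]| = #|[set i | P i]%SET|.
Proof.
apply: eq_card => i; rewrite finset.inE.
by case: (boolP (P i)) => Pi; [rewrite mem_set | rewrite memNset //=; apply/negP].
Qed.

Lemma Wml_Niso (m Lnat n : nat) (s : seq R) (E : {set 'I_n * 'I_n}) :
  (0 < m)%N -> (forall j : 'I_n, 0 <= nth 0 s j < Lnat%:R) ->
  (forall (i j : 'I_n) (k : 'I_(m * Lnat)), (i < j)%N ->
     ~~ (in_seg m k (nth 0 s i) && in_seg m k (nth 0 s j))) ->
  Wml m Lnat s E = Niso s E.
Proof.
move=> m0 sD nbad.
pose kx (j : 'I_n) := Num.truncn (nth 0 s j * m%:R).
have kxlt j : (kx j < m * Lnat)%N.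
  have /andP[s0 sL] := sD j.
  rewrite /kx truncn_lt_nat ?mulr_ge0 // natrM mulrC ltr_pM2l ?ltr0n //.
have segE (k : nat) (j : 'I_n) : in_seg m k (nth 0 s j) = (kx j == k).
  by rewrite in_segE //; case/andP: (sD j).
have key (k : 'I_(m * Lnat)) :
    Iseg m s E k = (\sum_(i < n) ((kx i == k) && Defs.isolated E i))%N :> nat.
  pose S := [set j : 'I_n | in_seg m k (nth 0 s j)]%SET.
  have S1 : (#|S| <= 1)%N.
    rewrite leqNgt; apply/negP => /card_gt1P[i [j [iS jS ij]]].
    move: iS jS; rewrite !finset.inE => iS jS.
    have [lij|lji|eij] := ltngtP i j.
    - by have := nbad i j k lij; rewrite iS jS.
    - by have := nbad j i k lji; rewrite iS jS.
    - by move/val_inj: eij ij => ->; rewrite eqxx.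
  rewrite /Iseg card_setF -/S.
  move: S1; rewrite leq_eqVlt ltnS leqn0 => /orP[/[dup] S1 /cards1P[j0 Sj0]|/eqP S0].
    rewrite S1 /=.
    rewrite (bigD1 j0) //= big1 ?addn0 => [|i ij0].
      have : j0 \in S by rewrite Sj0 set11.
      rewrite finset.inE segE => hj0; rewrite hj0 /=.
      congr (nat_of_bool _); apply/idP/idP => [/forallP /(_ j0)|isoj].
        by rewrite segE hj0.
      apply/forallP => j.
      apply/implyP; rewrite segE => kj.
      have : j \in S by rewrite finset.inE segE.
      by rewrite Sj0 finset.inE => /eqP ->.
    have : i \notin S by rewrite Sj0 finset.inE.
    by rewrite finset.inE segE => /negbTE ->.
  rewrite S0 /= big1 // => i _.
  have : i \notin S by rewrite (cards0_eq S0) finset.inE.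
  by rewrite finset.inE segE => /negbTE ->.
rewrite /Wml /Niso card_setb.
rewrite (eq_bigr _ (fun k _ => key k)) exchange_big /=.
apply: eq_bigr => i _.
rewrite (bigD1 (Ordinal (kxlt i))) //= eqxx /= big1 ?addn0 // => k nk.
by rewrite (_ : (kx i == k) = false) //; apply/negbTE; apply: contra nk => /eqP eki;
  apply/eqP; apply: val_inj; rewrite /= eki.
Qed.
End Comb.
Section EW.
Context (R : realType).

Lemma sum_edge_weight (h : R -> R -> R) n (s : seq R) :
  \sum_(E in {set 'I_n * 'I_n} | E \subset upper n) edge_weight h s E = 1.
Proof.
pose hp (p : 'I_n * 'I_n) := h (nth 0 s p.1) (nth 0 s p.2).
pose F p := if p \in upper n then hp p else 0.
pose G p := if p \in upper n then 1 - hp p else 1.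
have := @bigA_distr R 0 1 *%R +%R _ F G.
rewrite big1 => [|p _]; last first.
  rewrite /F /G; case: (p \in upper n) => /=; [by rewrite addrC subrK | by rewrite add0r].
move=> H; apply: (etrans _ (esym H)).
rewrite [RHS](bigID (fun J : {set _} => J \subset upper n)) /=.
rewrite [X in _ = _ + X]big1 ?addr0 => [|J nJ]; last first.
  have [p pJ pnU] : exists2 p, p \in J & p \notin upper n.
    by move/subsetPn: nJ => [p pJ pnU]; exists p.
  by rewrite (bigD1 p) //= pJ /F (negbTE pnU) mul0r.
apply: eq_bigr => J JU.
rewrite (bigID (fun p => p \in upper n)) /= [X in _ * X]big1 ?mulr1 => [|p pnU]; last first.
  have pnJ : p \notin J by move: pnU; apply: contraNN; exact: (fintype.subsetP JU).
  by rewrite (negbTE pnJ) /G (negbTE pnU).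
rewrite /edge_weight; apply: eq_bigr => p pU.
by rewrite /F /G pU; case: (p \in J).
Qed.
End EW.

Section Main.
Context (R : realType) (Lnat : nat) (Lpos : (0 < Lnat)%N) (h : R -> R -> R)
  (h01 : forall x y : R, 0 <= x < Lnat%:R -> 0 <= y < Lnat%:R -> 0 <= h x y <= 1)
  (m : nat) (m0 : (0 < m)%N).
Local Notation L := (Lnat%:R : R).
Local Notation mu := (@lebesgue_measure R).

Let L0 : 0 < L. Proof. by rewrite ltr0n. Qed.
Let L1 : 1 <= L. Proof. by rewrite ler1n. Qed.

Definition seg (k : nat) : set R := `[(k%:R / m%:R), (k.+1%:R / m%:R)[%classic.
Let mseg k : measurable (seg k). Proof. exact: measurable_itv. Qed.
Let mu_seg k : (mu (seg k) <= (m%:R^-1)%:E)%E.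
Proof.
rewrite /seg lebesgue_measure_itv /= lte_fin.
case: ifP => _; last by rewrite lee_fin invr_ge0.
by rewrite -EFinD lee_fin -mulrBl -natr1 addrAC subrr add0r mul1r.
Qed.

Lemma indic_seg k x : \1_(seg k) x = (in_seg m k x)%:R :> R.
Proof.
rewrite indicE /seg /in_seg; congr (_%:R).
by rewrite mem_setE ?in_itv.
Qed.

Lemma nthD s : domL L s -> forall i, 0 <= nth 0 s i < L.
Proof.
move=> ds i; case: (ltnP i (size s)) => [ilt|ige]; last by rewrite nth_default // lexx.
by move/(all_nthP 0): ds => /(_ i ilt).
Qed.

Lemma w_ge0 n s (E : {set 'I_n * 'I_n}) : domL L s -> 0 <= edge_weight h s E.
Proof.
move=> ds; apply: prodr_ge0 => p _.
have /andP[h0 h1] := h01 (nthD ds p.1) (nthD ds p.2).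
by case: (p \in E) => //; rewrite subr_ge0.
Qed.

Definition Fev n (ev : seq R -> {set 'I_n * 'I_n} -> bool) (s : seq R) : \bar R :=
  (\sum_(E in {set 'I_n * 'I_n} | E \subset upper n) edge_weight h s E * (ev s E)%:R)%:E.

Lemma Fev01 n ev s : domL L s -> (0 <= @Fev n ev s)%E /\ (@Fev n ev s <= 1)%E.
Proof.
move=> ds; rewrite /Fev !lee_fin; split.
  by apply: sumr_ge0 => E _; apply: mulr_ge0; [exact: w_ge0 | case: (ev s E)].
apply: (@le_trans _ _ (\sum_(E in {set 'I_n * 'I_n} | E \subset upper n) edge_weight h s E)).
  by apply: ler_sum => E _; rewrite ler_piMr ?w_ge0 //; case: (ev s E).
by rewrite sum_edge_weight.
Qed.

Definition badb n (s : seq R) : bool :=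
  [exists t : 'I_n * 'I_n * 'I_(m * Lnat),
    ((t.1.1 < t.1.2)%N && in_seg m t.2 (nth 0 s t.1.1)) && in_seg m t.2 (nth 0 s t.1.2)].
Definition gB n (t : 'I_n * 'I_n * 'I_(m * Lnat)) (s : seq R) : R :=
  \1_(seg t.2) (nth 0 s t.1.1) * \1_(seg t.2) (nth 0 s t.1.2).
Definition rB n := [seq t : ('I_n * 'I_n * 'I_(m * Lnat))%type <- index_enum ('I_n * 'I_n * 'I_(m * Lnat))%type | (t.1.1 < t.1.2)%N].

Lemma gB_ge0 n t s : 0 <= @gB n t s.
Proof. by rewrite /gB !indic_seg mulr_ge0. Qed.

Lemma Bbad n s : badb n s -> 1 <= \sum_(t <- rB n) gB t s.
Proof.
move=> /existsP[t /andP[/andP[lt i1] i2]].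
rewrite /rB big_filter (bigD1 t) //= /gB !indic_seg i1 i2 mulr1 lerDl.
by apply: sumr_ge0 => u _; rewrite !indic_seg mulr_ge0.
Qed.

Lemma good n s (E : {set 'I_n * 'I_n}) : domL L s -> ~~ badb n s -> Wml m Lnat s E = Niso s E.
Proof.
move=> ds nb; apply: Wml_Niso => // [j|i j k ij]; first exact: nthD.
by move/existsPn: nb => /(_ (i, j, k)) /=; rewrite ij.
Qed.


Lemma per_n n (evF evG : seq R -> {set 'I_n * 'I_n} -> bool) :
  (forall s E, domL L s -> ~~ badb n s -> evF s E = evG s E) ->
  (iint L n (Fev evF) <= iint L n (Fev evG) +
     \sum_(t <- rB n) iint L n (fun s => (gB t s)%:E))%E.
Proof.
move=> eFG.
pose FAg s := if badb n s then 0%E else Fev evF s.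
have FAg0 s : domL L s -> (0 <= FAg s)%E.
  by move=> ds; rewrite /FAg; case: (badb n s) => //; case: (Fev01 evF ds).
have B0 s : (0 <= (\sum_(t <- rB n) gB t s)%:E)%E.
  by rewrite lee_fin; apply: sumr_ge0 => t _; exact: gB_ge0.
apply: (@le_trans _ _ (iint L n (fun s => FAg s + (\sum_(t <- rB n) gB t s)%:E))).
  apply: iint_le => s ds; first by case: (Fev01 evF ds).
  rewrite /FAg; case: (boolP (badb n s)) => b.
    rewrite add0e; apply: le_trans (Fev01 evF ds).2 _.
    by rewrite lee_fin; exact: Bbad.
  by rewrite leeDl.
apply: le_trans (iint_subadd_sum _ _ _) _ => //.
- by move=> t s _; exact: gB_ge0.
- move=> t; rewrite mem_filter => /andP[ij _].
  by apply: (IM_pair L0) => //; exact: mseg.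
apply: leeD => //; apply: iint_le => // s ds.
rewrite /FAg; case: (boolP (badb n s)) => b; first by case: (Fev01 evG ds).
rewrite /Fev lee_fin le_eqVlt; apply/orP; left; apply/eqP.
by apply: eq_bigr => E _; rewrite eFG.
Qed.

Lemma Bs_le n : (\sum_(t <- rB n) iint L n (fun s => (gB t s)%:E) <=
  ((n * n * (m * Lnat))%:R * (m%:R^-1 * m%:R^-1 * L ^+ n))%:E)%E.
Proof.
have mi0 : 0 <= m%:R^-1 :> R by rewrite invr_ge0.
pose c := m%:R^-1 * m%:R^-1 * L ^+ n.
have c0 : 0 <= c by rewrite /c !mulr_ge0 // exprn_ge0 // ltW.
rewrite /rB big_filter.
apply: (@le_trans _ _ (\sum_(t : 'I_n * 'I_n * 'I_(m * Lnat) | (t.1.1 < t.1.2)%N) c%:E)).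
  apply: lee_sum => t ij.
  apply: (iint_pair_le L0) => //.
rewrite sumEFin lee_fin.
apply: (@le_trans _ _ (\sum_(t : 'I_n * 'I_n * 'I_(m * Lnat)) c)).
  by rewrite [X in _ <= X](bigID (fun t : 'I_n * 'I_n * 'I_(m * Lnat) => (t.1.1 < t.1.2)%N)) /= lerDl sumr_ge0.
by rewrite sumr_const !card_prod !card_ord mulr_natl.
Qed.

Definition cn (n : nat) : R := expR (- L) * L ^+ n / n`!%:R * L ^- n.
Lemma cn_ge0 n : 0 <= cn n.
Proof. by rewrite /cn !mulr_ge0 ?invr_ge0 ?exprn_ge0 ?expR_ge0 // ltW. Qed.

Definition bnd (n : nat) : R := (n * n * (m * Lnat))%:R * (m%:R^-1 * m%:R^-1 * L ^+ n).
Lemma bnd_ge0 n : 0 <= bnd n.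
Proof. by rewrite /bnd !mulr_ge0 ?invr_ge0 ?exprn_ge0 // ltW. Qed.

Definition Dm : \bar R := (\sum_(0 <= n <oo) ((cn n)%:E * (bnd n)%:E))%E.

Lemma model_ge0 ev : (0 <= model_prob L h ev)%E.
Proof.
apply: nneseries_ge0 => n _ _; apply: mule_ge0.
  by rewrite lee_fin -/(cn n) cn_ge0.
by apply: iint_ge0 => s ds; case: (Fev01 (ev n) ds).
Qed.

Lemma model_le (ev1 ev2 : forall n, seq R -> {set 'I_n * 'I_n} -> bool) :
  (forall n s E, domL L s -> ~~ badb n s -> ev1 n s E = ev2 n s E) ->
  (model_prob L h ev1 <= model_prob L h ev2 + Dm)%E.
Proof.
move=> e12; rewrite /model_prob /Dm -nneseriesD; first last.
- by move=> n _ _; rewrite -EFinM lee_fin mulr_ge0 ?cn_ge0 ?bnd_ge0.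
- move=> n _ _; apply: mule_ge0; first by rewrite lee_fin -/(cn n) cn_ge0.
  by apply: iint_ge0 => s ds; case: (Fev01 (ev2 n) ds).
apply: lee_nneseries => [n _ _|n _].
  apply: mule_ge0; first by rewrite lee_fin -/(cn n) cn_ge0.
  by apply: iint_ge0 => s ds; case: (Fev01 (ev1 n) ds).
rewrite -/(cn n) -ge0_muleDr; first last.
- by rewrite lee_fin bnd_ge0.
- by apply: iint_ge0 => s ds; case: (Fev01 (ev2 n) ds).
apply: lee_wpmul2l; first by rewrite lee_fin cn_ge0.
apply: le_trans (per_n (evF := ev1 n) (evG := ev2 n) (e12 n)) _.
by apply: leeD => //; exact: Bs_le.
Qed.

Lemma sq_le_3pow n : (n * n <= 3 ^ n)%N.
Proof.
have h1 : forall k, (k.+1 <= 3 ^ k)%N.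
  elim=> [|k IH] //; rewrite expnS; lia.
elim: n => [|n IH] //; have := h1 n; rewrite expnS; lia.
Qed.

Lemma term_le n : cn n * bnd n <= (expR (- L) * L / m%:R) * ((3 * L) ^+ n / n`!%:R).
Proof.
have mn0 : m%:R != 0 :> R by rewrite pnatr_eq0 -lt0n.
have Ln0 : L != 0 by rewrite gt_eqF.
have fn0 : n`!%:R != 0 :> R by rewrite pnatr_eq0 -lt0n fact_gt0.
have -> : cn n * bnd n = (expR (- L) * L / m%:R) * ((n * n)%:R * L ^+ n / n`!%:R).
  by rewrite /cn /bnd !natrM; field; rewrite fn0 mn0 expf_neq0.
apply: ler_wpM2l; first by rewrite !mulr_ge0 ?invr_ge0 ?expR_ge0 // ltW.
apply: ler_wpM2r; first by rewrite invr_ge0.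
rewrite exprMn; apply: ler_wpM2r; first by rewrite exprn_ge0 // ltW.
by rewrite -natrX ler_nat sq_le_3pow.
Qed.

Lemma exp_series_le (x : R) : 0 <= x ->
  (\sum_(0 <= n <oo) ((x ^+ n / n`!%:R)%:E) <= (expR x)%:E)%E.
Proof.
move=> x0; apply: lime_le.
  by apply: is_cvg_nneseries => n _ _; rewrite lee_fin divr_ge0 ?exprn_ge0.
apply: nearW => N; rewrite /= sumEFin lee_fin.
have := @nondecreasing_cvgn_le _ (series (exp_coeff x)) _ (is_cvg_series_exp_coeff x) N.
apply.
by apply: nondecreasing_series => k _ _; exact: exp_coeff_ge0.
Qed.

Lemma Dm_le : (Dm <= ((expR (- L) * L / m%:R) * expR (3 * L))%:E)%E.
Proof.
have a0 : 0 <= expR (- L) * L / m%:R by rewrite !mulr_ge0 ?invr_ge0 ?expR_ge0 // ltW.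
apply: (@le_trans _ _ (\sum_(0 <= n <oo) ((expR (- L) * L / m%:R)%:E * ((3 * L) ^+ n / n`!%:R)%:E))%E).
  apply: lee_nneseries => [n _ _|n _]; first by rewrite -EFinM lee_fin mulr_ge0 ?cn_ge0 ?bnd_ge0.
  by rewrite -!EFinM lee_fin term_le.
rewrite nneseriesZl; last by move=> n _; rewrite lee_fin divr_ge0 ?exprn_ge0 // mulr_ge0 // ltW.
rewrite [X in (_ <= X)%E]EFinM; apply: lee_wpmul2l; first by rewrite lee_fin.
by apply: exp_series_le; rewrite mulr_ge0 // ltW.
Qed.
End Main.

Section Final.
Context (R : realType).

Lemma fine_close (P Q Dd : \bar R) (d : R) : (0 <= P)%E -> (0 <= Q)%E -> (0 <= Dd)%E ->
  (Dd <= d%:E)%E -> (P <= Q + Dd)%E -> (Q <= P + Dd)%E -> `|fine P - fine Q| <= d.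
Proof.
case: Dd => [r| |]; case: P => [p| |]; case: Q => [q| |] //=; rewrite ?lee_fin //.
- move=> p0 q0 r0 rd pq qp; rewrite ler_norml; apply/andP; split; lra.
- by move=> _ _ r0 rd _ _; rewrite subr0 normr0 (le_trans r0).

Qed.
End Final.

Theorem lemma2 (R : realType) (H : R -> R) (tau alpha : R) (L : nat)
  (HmeasH : measurable_fun (`[0%R, +oo[%classic : set R) H)
  (HH01 : forall x : R, 0 <= x -> 0 <= H x <= 1)
  (HH1fin : (\int[@lebesgue_measure R]_(x in `[0%R, +oo[%classic) (H x)%:E < +oo)%E)
  (HH2 : (\int[@lebesgue_measure R]_(x in `[0%R, +oo[%classic) ((H x) ^+ 2)%:E
           < \int[@lebesgue_measure R]_(x in `[0%R, +oo[%classic) (H x)%:E)%E)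
  (Htau : 0 < tau) (Halpha : 0 < alpha) (HL : (0 < L)%N)
  (HRL : 0 < RL H tau L%:R) :
  let h := htilde H tau alpha L%:R in
  (fun m : nat =>
     dTV_nat
       (fun A : set nat => model_prob L%:R h (fun n s E => Niso s E \in A))
       (fun A : set nat => model_prob L%:R h (fun n s E => Wml m L s E \in A)))
  @ \oo --> 0.
Proof.
move=> h.
have h01 : forall x y : R, 0 <= x < L%:R -> 0 <= y < L%:R -> 0 <= h x y <= 1.
  move=> x y /andP[x0 xL] /andP[y0 yL]; rewrite /h /htilde.
  have rho0 : 0 <= rhoL L%:R x y / RL H tau L%:R.
    apply: divr_ge0; last exact: ltW.
    have : `|x - y| <= L%:R by rewrite ler_norml; apply/andP; split; lra.
    by rewrite /rhoL le_min normr_ge0 subr_ge0.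
  have /andP[H0 H1] := HH01 _ rho0.
  case: ifP => _; rewrite ?mulr1 ?mulr0 ?lexx //; exact/andP.
pose Lr := (L%:R : R).
pose K := expR (- Lr) * Lr * expR (3 * Lr).
have K0 : 0 <= K by rewrite /K !mulr_ge0 ?expR_ge0 // ler0n.
pose S m := [set `|fine (model_prob L%:R h (fun n s E => Niso s E \in A)) -
                   fine (model_prob L%:R h (fun n s E => Wml m L s E \in A))| | A in [set: set nat]].
have key m : (0 < m)%N -> forall y, S m y -> y <= K / m%:R.
  move=> m0 y [A _ <-].
  apply: (fine_close (Dd := Dm R L m)).
  - exact: (model_ge0 HL h01).
  - exact: (model_ge0 HL h01).
  - apply: nneseries_ge0 => n _ _; rewrite -EFinM lee_fin mulr_ge0 ?cn_ge0 ?bnd_ge0 //.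
  - apply: le_trans (Dm_le R HL m0) _; rewrite lee_fin /K /Lr le_eqVlt; apply/orP; left.
    by apply/eqP; rewrite mulrAC.
  - apply: (model_le HL h01) => n s E ds nb; by rewrite (good HL m0 E ds nb).
  - apply: (model_le HL h01) => n s E ds nb; by rewrite (good HL m0 E ds nb).
have Sne m : S m !=set0.
  by exists (`|fine (model_prob L%:R h (fun n s E => Niso s E \in setT)) -
               fine (model_prob L%:R h (fun n s E => Wml m L s E \in setT))|); exists setT.
have dTV_le m : (0 < m)%N -> dTV_nat
       (fun A : set nat => model_prob L%:R h (fun n s E => Niso s E \in A))
       (fun A : set nat => model_prob L%:R h (fun n s E => Wml m L s E \in A)) <= K / m%:R.
  by move=> m0; apply: ge_sup; [exact: Sne | exact: key].
have dTV_ge0 m : (0 < m)%N -> 0 <= dTV_nat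
       (fun A : set nat => model_prob L%:R h (fun n s E => Niso s E \in A))
       (fun A : set nat => model_prob L%:R h (fun n s E => Wml m L s E \in A)).
  move=> m0; have hs : has_sup (S m) by split; [exact: Sne | exists (K / m%:R); exact: key].
  have [y Sy] := Sne m.
  apply: le_trans (sup_upper_bound hs Sy).
  by case: Sy => A _ <-.
apply: (@squeeze_cvgr _ _ _ _ (cst 0) (fun m => 2 * K * harmonic m)).
- near=> m; rewrite dTV_ge0 /=; last by near: m; exists 1%N.
  apply: le_trans (dTV_le m _) _; first by near: m; exists 1%N.
  have m1 : (1 <= m)%N by near: m; exists 1%N.
  have mm : m%:R^-1 <= 2 / m.+1%:R :> R.
    rewrite -[X in X <= _]div1r ler_pdivrMr ?ltr0n // mulrAC ler_pdivlMr ?ltr0n //.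
    by rewrite mul1r -natrM ler_nat; lia.
  rewrite /= (mulrC 2 K) -(mulrA K); exact: ler_wpM2l.
- exact: cvg_cst.
- rewrite -(mulr0 (2 * K)); apply: cvgMl_tmp; exact: cvg_harmonic.
Unshelve. all: by end_near.
Qed.
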